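(* Let $(\Omega,\mathcal F,\mathbf P)$ be a probability space, $L^\infty=L^\infty(\Omega,\mathcal F,\mathbf P)$ with its norm dual $(L^\infty)^*$, and let $C\subset L^\infty$ be a convex cone such that $C\cap L^\infty_+=\{0\}$, where $L^\infty_+$ is the set of a.s. non-negative elements. Let $C^\circ=\{\xi\in (L^\infty)^*:\langle x,\xi\rangle\le 0 \text{ for all } x\in C\}$. Then for any $f\in (L^\infty)^*$ the following conditions are equivalent: (i) $\sup_{x\in C_1}\langle x,f\rangle<+\infty$, where $C_1=\{x\in C: x^-\le 1 \text{ a.s.}\}$; (ii) there exists $g\in (L^\infty)^*$ such that $g\ge f$ and $g\in C^\circ$.
   Context: $x^-=\max\{-x,0\}$. For $f,g\in (L^\infty)^*$, $g\ge f$ means $\langle x,g-f\rangle\ge 0$ for all $x\in L^\infty_+$. *)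

(* Defs.v *)
From HB Require Import structures.
From mathcomp Require Import all_boot all_order all_algebra.
From mathcomp Require Import all_classical all_reals all_analysis.
Set Implicit Arguments. Unset Strict Implicit. Unset Printing Implicit Defensive.
Import Order.TTheory GRing.Theory Num.Theory.
Local Open Scope classical_set_scope.
Local Open Scope ring_scope.

(* Elements of L^infty are represented by their representatives;
   every notion below is invariant under P-a.e. equality. *)
Definition Linf d (T : measurableType d) (R : realType)
    (P : probability T R) : set (T -> R) :=
  [set x : T -> R | measurable_fun [set: T] x /\
           exists M : R, {ae P, forall t, `|x t| <= M}].

Definition negpart (T : Type) (R : realType) (x : T -> R) : T -> R :=
  fun t => Num.max (- x t) 0.

(* A functional
   is a map on representatives that is linear on L^infty, does not depend on
   the representative (a.e.-equality), and is bounded: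
   |<x,f>| <= M * ||x||_infty, written as |<x,f>| <= M c for every a.e. bound c
   of |x|. *)
Definition Linf_dual d (T : measurableType d) (R : realType)
    (P : probability T R) (f : (T -> R) -> R) : Prop :=
  [/\ (forall x y, Linf P x -> Linf P y -> f (x \+ y) = f x + f y),
      (forall (a : R) x, Linf P x -> f (fun t => a * x t) = a * f x),
      (forall x y, Linf P x -> Linf P y ->
         {ae P, forall t, x t = y t} -> f x = f y) &
      (exists M : R, forall x (c : R), Linf P x ->
         {ae P, forall t, `|x t| <= c} -> `|f x| <= M * c)].

(* A subset C of L^infty (as a set of a.e.-classes: closed under a.e. equality
   within L^infty) which is a convex cone. *)
Definition Linf_convex_cone d (T : measurableType d) (R : realType)
    (P : probability T R) (C : set (T -> R)) : Prop :=
  [/\ C `<=` Linf P,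
      (forall x y, C x -> Linf P y -> {ae P, forall t, x t = y t} -> C y),
      C (fun _ => 0) &
      (forall x y (a b : R), 0 <= a -> 0 <= b -> C x -> C y ->
         C (fun t => a * x t + b * y t))].

Definition cone_meets_pos_trivially d (T : measurableType d) (R : realType)
    (P : probability T R) (C : set (T -> R)) : Prop :=
  forall x, C x -> {ae P, forall t, 0 <= x t} -> {ae P, forall t, x t = 0}.

Definition polar d (T : measurableType d) (R : realType)
    (P : probability T R) (C : set (T -> R)) : set ((T -> R) -> R) :=
  [set g | Linf_dual P g /\ forall x, C x -> g x <= 0].

Definition dual_ge d (T : measurableType d) (R : realType)
    (P : probability T R) (g f : (T -> R) -> R) : Prop :=
  forall x, Linf P x -> {ae P, forall t, 0 <= x t} -> 0 <= g x - f x.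

Definition C1 d (T : measurableType d) (R : realType)
    (P : probability T R) (C : set (T -> R)) : set (T -> R) :=
  [set x | C x /\ {ae P, forall t, negpart x t <= 1}].

(* Main.v *)
Require Import Defs.
From HB Require Import structures.
From mathcomp Require Import all_boot all_order all_algebra.
From mathcomp Require Import all_classical all_reals all_analysis.
From mathcomp Require Import ring lra.
Import Order.TTheory GRing.Theory Num.Theory.
Local Open Scope classical_set_scope.
Local Open Scope ring_scope.

Section HBsec.
Context (T : Type) (R : realType).

Definition addf (x y : T -> R) := fun t => x t + y t.
Definition scal (a : R) (x : T -> R) := fun t => a * x t.
Definition zerof : T -> R := fun _ => 0.

Variables (S : set (T -> R)) (q : (T -> R) -> R).
Hypothesis S0 : S zerof.
Hypothesis Sadd : forall x y, S x -> S y -> S (addf x y).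
Hypothesis Sscal : forall a x, S x -> S (scal a x).
Hypothesis qadd : forall x y, S x -> S y -> q (addf x y) <= q x + q y.
Hypothesis qscal : forall a x, 0 < a -> S x -> q (scal a x) = a * q x.

Definition good (G : set ((T -> R) * R)) :=
  [/\ (forall x a b, G (x,a) -> G (x,b) -> a = b),
      (forall x a y b, G (x,a) -> G (y,b) -> G (addf x y, a + b)),
      (forall x a c, G (x,a) -> G (scal c x, c * a)) &
      (forall x a, G (x,a) -> S x /\ a <= q x)].

Lemma q0 : q zerof = 0.
Proof.
have h := @qscal 2 zerof (ltr0Sn R 1) S0.
have e : scal 2 zerof = zerof by apply: funext => t; rewrite /scal /zerof mulr0.
rewrite e in h; lra.
Qed.

Lemma good_chain (F : set (set ((T -> R) * R))) :
  F `<=` good -> total_on F subset -> good (\bigcup_(X in F) X).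
Proof.
move=> Fg tot; split.
- move=> x a b [X FX Xa] [Y FY Yb].
  have [XY|YX] := tot X Y FX FY.
  + by case: (Fg Y FY) => fn _ _ _; apply: fn (XY _ Xa) Yb.
  + by case: (Fg X FX) => fn _ _ _; apply: fn Xa (YX _ Yb).
- move=> x a y b [X FX Xa] [Y FY Yb].
  have [XY|YX] := tot X Y FX FY.
  + by exists Y => //; case: (Fg Y FY) => _ ad _ _; apply: ad (XY _ Xa) Yb.
  + by exists X => //; case: (Fg X FX) => _ ad _ _; apply: ad Xa (YX _ Yb).
- move=> x a c [X FX Xa]; exists X => //.
  by case: (Fg X FX) => _ _ sc _; apply: sc.
- move=> x a [X FX Xa].
  by case: (Fg X FX) => _ _ _ dm; apply: dm.
Qed.

Lemma hahn_banach : exists h : (T -> R) -> R,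
  [/\ forall x y, S x -> S y -> h (addf x y) = h x + h y,
      forall a x, S x -> h (scal a x) = a * h x &
      forall x, S x -> h x <= q x].
Proof.
have [A [gA maxA]] := Zorn_bigcup good_chain.
case: gA => fnA adA scA dmA.
have A0 : A (zerof, 0).
  have [[[x0 a0] Ax0]|An] := pselect (exists p, A p).
    have := scA _ _ 0 Ax0.
    have -> : scal 0 x0 = zerof by apply: funext => t; rewrite /scal mul0r.
    by rewrite mul0r.
  exfalso; apply: (maxA [set (zerof, 0)]).
    split; first by move=> p Ap; exfalso; apply: An; exists p.
    by move=> /(_ (zerof, 0) erefl) Ap; apply: An; exists (zerof, 0).
  have ez : addf zerof zerof = zerof by apply: funext => t; rewrite /addf /zerof addr0.
  have es : forall c, scal c zerof = zerof by move=> c; apply: funext => t; rewrite /scal /zerof mulr0.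
  split.
  - by move=> x a b /= [_ ->] [_ ->].
  - by move=> x a y b /= [-> ->] [-> ->]; rewrite ez addr0.
  - by move=> x a c /= [-> ->]; rewrite es mulr0.
  - by move=> x a /= [-> ->]; rewrite q0.
have domA : forall z, S z -> exists a, A (z, a).
  move=> z Sz; apply/not_existsP => nz.
  set L := [set r | exists y a, A (y, a) /\ r = a - q (addf y (scal (-1) z))].
  have key : forall y1 a1 y2 a2, A (y1, a1) -> A (y2, a2) ->
      a1 - q (addf y1 (scal (-1) z)) <= q (addf y2 z) - a2.
    move=> y1 a1 y2 a2 A1 A2.
    have [S1 _] := dmA _ _ A1; have [S2 _] := dmA _ _ A2.
    have [_ le12] := dmA _ _ (adA _ _ _ _ A1 A2).
    have e : addf y1 y2 = addf (addf y1 (scal (-1) z)) (addf y2 z).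
      by apply: funext => t; rewrite /addf /scal; ring.
    have := qadd _ _ (Sadd _ _ S1 (Sscal (-1) _ Sz)) (Sadd _ _ S2 Sz).
    rewrite -e; lra.
  have L0 : L !=set0 by exists (0 - q (addf zerof (scal (-1) z))); exists zerof, 0.
  have Lub : ubound L (q (addf zerof z) - 0).
    by move=> r [y [a [Aya ->]]]; apply: key.
  set c := sup L.
  have cge : forall y a, A (y, a) -> a - q (addf y (scal (-1) z)) <= c.
    move=> y a Aya; apply: ub_le_sup; first by exists (q (addf zerof z) - 0).
    by exists y, a.
  have cle : forall y a, A (y, a) -> c <= q (addf y z) - a.
    move=> y a Aya; apply: ge_sup => // r [y' [a' [Aya' ->]]]; exact: key.
  set B := [set p | exists y a t, A (y, a) /\ p = (addf y (scal t z), a + t * c)].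
  apply: (maxA B).
    split.
      move=> [y a] Aya; exists y, a, 0; split => //.
      have -> : addf y (scal 0 z) = y by apply: funext => t; rewrite /addf /scal; ring.
      by rewrite mul0r addr0.
    move=> /(_ (z, c)) BA; apply: (nz c); apply: BA.
    exists zerof, 0, 1; split => //.
    have -> : addf zerof (scal 1 z) = z by apply: funext => t; rewrite /addf /scal /zerof; ring.
    by rewrite add0r mul1r.
  split.
  - move=> x a b [y1 [a1 [t1 [A1 [-> ->]]]]] [y2 [a2 [t2 [A2 []]]]] exy ->.
    have [tt|tn] := eqVneq t1 t2.
      subst t2.
      have ey : y1 = y2.
        apply: funext => t; have := congr1 (fun f => f t) exy.
        rewrite /addf /scal => h; lra.
      by subst y2; rewrite (fnA _ _ _ A1 A2).
    exfalso; apply: (nz ((t2 - t1)^-1 * (a1 + (-1) * a2))).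
    have := scA _ _ ((t2 - t1)^-1) (adA _ _ _ _ A1 (scA _ _ (-1) A2)).
    suff -> : scal (t2 - t1)^-1 (addf y1 (scal (-1) y2)) = z by [].
    apply: funext => t; have := congr1 (fun f => f t) exy.
    rewrite /addf /scal => h.
    have d : t2 - t1 != 0 by rewrite subr_eq0 eq_sym.
    apply: (mulfI d); rewrite mulrA mulfV // mul1r.
    lra.
  - move=> x a y b [y1 [a1 [t1 [A1 [-> ->]]]]] [y2 [a2 [t2 [A2 [-> ->]]]]].
    exists (addf y1 y2), (a1 + a2), (t1 + t2); split; first exact: adA.
    congr pair; last by ring.
    by apply: funext => t; rewrite /addf /scal; ring.
  - move=> x a k [y1 [a1 [t1 [A1 [-> ->]]]]].
    exists (scal k y1), (k * a1), (k * t1); split; first exact: scA.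
    congr pair; last by ring.
    by apply: funext => t; rewrite /addf /scal; ring.
  - move=> x a [y [a' [t [Ay [-> ->]]]]].
    have [Sy ay] := dmA _ _ Ay.
    split; first exact: Sadd _ _ Sy (Sscal t _ Sz).
    have [tp|tn|t0] := ltgtP 0 t.
    + have := cle _ _ (scA _ _ (t^-1) Ay).
      have e : scal t (addf (scal t^-1 y) z) = addf y (scal t z).
        apply: funext => s; rewrite /addf /scal mulrDr mulrA mulfV ?gt_eqF //.
        by rewrite mul1r.
      have := qscal _ _ tp (Sadd _ _ (Sscal t^-1 _ Sy) Sz); rewrite e => ->.
      move=> h.
      have h2 := ler_wpM2l (ltW tp) h.
      rewrite mulrBr mulrA mulfV ?gt_eqF // mul1r in h2.
      lra.
    + have sp : 0 < - t by rewrite oppr_gt0.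
      have := cge _ _ (scA _ _ ((- t)^-1) Ay).
      have e : scal (- t) (addf (scal (- t)^-1 y) (scal (-1) z)) = addf y (scal t z).
        apply: funext => s; rewrite /addf /scal mulrDr mulrA mulfV ?gt_eqF //.
        by rewrite mul1r; ring.
      have := qscal _ _ sp (Sadd _ _ (Sscal (- t)^-1 _ Sy) (Sscal (-1) _ Sz)); rewrite e => ->.
      move=> h.
      have h2 := ler_wpM2l (ltW sp) h.
      rewrite mulrBr mulrA mulfV ?gt_eqF // mul1r in h2.
      lra.
    + subst t.
      have -> : addf y (scal 0 z) = y by apply: funext => s; rewrite /addf /scal; ring.
      by rewrite mul0r addr0.
pose h x := xget 0 [set a | A (x, a)].
have hA : forall x, S x -> A (x, h x) by move=> x Sx; apply: xgetPex (domA _ Sx).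
exists h; split.
- move=> x y Sx Sy; apply: (fnA _ _ _ (hA _ (Sadd _ _ Sx Sy))).
  exact: adA (hA _ Sx) (hA _ Sy).
- move=> a x Sx; apply: (fnA _ _ _ (hA _ (Sscal a _ Sx))).
  exact: scA (hA _ Sx).
- by move=> x Sx; case: (dmA _ _ (hA _ Sx)).
Qed.

End HBsec.
Arguments addf {T R} x y.
Arguments scal {T R} a x.
Arguments zerof {T R}.

Section Aux.
Context (d : measure_display) (T : measurableType d) (R : realType)
  (P : probability T R).

Lemma ae_const (Q : Prop) : {ae P, forall t, Q} -> Q.
Proof.
move=> h.
have PF : ProperFilter (almost_everywhere P).
  apply: ae_properfilter_algebraOfSetsType.
  exact: (eq_rect_r (fun v => (0 < v)%E) lte01 (probability_setT P)).
exact: (@filter_const _ _ PF Q h).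
Qed.

Lemma Linf0 : Linf P (@zerof T R).
Proof.
split; first exact: measurable_cst.
by exists 0; apply: aeW => t; rewrite /zerof normr0.
Qed.

Lemma Linf1 : Linf P (fun _ : T => (1 : R)).
Proof.
split; first exact: measurable_cst.
by exists 1; apply: aeW => t; rewrite normr1.
Qed.

Lemma Linf_add x y : Linf P x -> Linf P y -> Linf P (addf x y).
Proof.
move=> [mx [M1 h1]] [my [M2 h2]]; split.
  exact: measurable_realfun.measurable_funD.
exists (M1 + M2); apply: filterS2 h1 h2 => t a b.
by rewrite /addf (le_trans (ler_normD _ _)) // lerD.
Qed.

Lemma Linf_scal a x : Linf P x -> Linf P (scal a x).
Proof.
move=> [mx [M1 h1]]; split.
  exact: (measurable_realfun.measurable_funM (measurable_cst a) mx).
exists (`|a| * M1); apply: filterS h1 => t b.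
by rewrite /scal normrM ler_wpM2l.
Qed.

End Aux.
Arguments Linf0 {d T R} P.
Arguments Linf1 {d T R} P.
Arguments Linf_add {d T R P x y}.
Arguments Linf_scal {d T R P} a {x}.
Arguments ae_const {d T R P Q}.

Theorem corollary1 (d : measure_display) (T : measurableType d) (R : realType)
  (P : probability T R) (C : set (T -> R)) :
  Linf_convex_cone P C -> cone_meets_pos_trivially P C ->
  forall f : (T -> R) -> R, Linf_dual P f ->
  ((ereal_sup [set (f x)%:E | x in C1 P C] < +oo)%E <->
   exists g : (T -> R) -> R, Linf_dual P g /\ dual_ge P g f /\ polar P C g).
Proof.
move=> [CL Cae C0 Ccone] Ctriv f [fadd fscal fae [Mf fb]].
have f0 : f (@zerof T R) = 0.
  have := fscal 0 _ (Linf0 P); rewrite mul0r => <-.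
  by congr f; apply: funext => t; rewrite mul0r.
split; last first.
  move=> [g [[gadd gscal gae [Mg gb]] [gef [_ gC]]]].
  apply: le_lt_trans (ltry (g (fun _ => 1) - f (fun _ => 1))).
  apply: ge_ereal_sup => _ [x [Cx negx] <-]; rewrite lee_fin.
  have Lx := CL _ Cx.
  have Lu := Linf_add Lx (Linf1 P).
  have := gef _ Lu.
  rewrite (gadd _ _ Lx (Linf1 P)) (fadd _ _ Lx (Linf1 P)).
  have gx := gC _ Cx.
  have : {ae P, forall t, 0 <= addf x (fun _ => 1) t}.
    apply: filterS negx => t; rewrite /negpart /addf ge_max => /andP[h _].
    lra.
  move=> hae /(_ hae) h; lra.
move=> supfin.
have Cscal : forall a x, 0 <= a -> C x -> C (scal a x).
  move=> a x a0 Cx; have := Ccone x _ a 0 a0 (lexx 0) Cx C0.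
  suff -> : scal a x = (fun t => a * x t + 0 * 0) by [].
  by apply: funext => t; rewrite /scal mul0r addr0.
have Cadd : forall x y, C x -> C y -> C (addf x y).
  move=> x y Cx Cy; have := Ccone x y 1 1 ler01 ler01 Cx Cy.
  suff -> : addf x y = (fun t => 1 * x t + 1 * y t) by [].
  by apply: funext => t; rewrite /addf !mul1r.
have C1z : C1 P C (@zerof T R).
  split; first exact: C0.
  by apply: aeW => t; rewrite /negpart /zerof oppr0 maxxx ler01.
set E := [set (f x)%:E | x in C1 P C].
have supge : (0 <= ereal_sup E)%E.
  by apply: ereal_sup_ubound; exists zerof => //; rewrite f0.
pose s := fine (ereal_sup E).
have es : ereal_sup E = s%:E.
  by move: supfin supge; rewrite /s; case: (ereal_sup E).
have s0 : 0 <= s by move: supge; rewrite es lee_fin.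
have fC1 : forall x, C1 P C x -> f x <= s.
  move=> x Cx; rewrite -lee_fin -es; apply: ereal_sup_ubound; by exists x.
have fCb : forall x b, C x -> 0 <= b -> {ae P, forall t, negpart x t <= b} ->
    f x <= s * (b + 1).
  move=> x b Cx b0 hb.
  have bp : 0 < b + 1 by lra.
  set c := (b + 1)^-1.
  have cp : 0 < c by rewrite invr_gt0.
  have cb : c * (b + 1) = 1 by rewrite mulVf ?gt_eqF.
  have : C1 P C (scal c x).
    split; first exact: Cscal (ltW cp) Cx.
    apply: filterS hb => t; rewrite /negpart /scal !ge_max => /andP[h1 _].
    rewrite ler01 andbT.
    have h2 := ler_wpM2l (ltW cp) h1.
    lra.
  move=> /fC1; rewrite /scal (fscal _ _ (CL _ Cx)) => h.
  have h2 := ler_wpM2l (ltW bp) h.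
  rewrite mulrA (mulrC (b + 1)) cb mul1r in h2.
  lra.
pose Q (z : T -> R) := [set e | exists x c, [/\ C x, 0 <= c,
   {ae P, forall t, z t <= x t + c} & e = - f x + s * c]].
pose q z := inf (Q z).
have Qne : forall z, Linf P z -> Q z !=set0.
  move=> z [_ [m hm]].
  have m0 : 0 <= m by apply: ae_const; apply: filterS hm => t; apply: le_trans.
  exists (- f zerof + s * m); exists zerof, m; split => //.
  apply: filterS hm => t; rewrite /zerof add0r; apply: le_trans; exact: ler_norm.
have Qlb : forall z, Linf P z -> has_lbound (Q z).
  move=> z [_ [m hm]].
  have m0 : 0 <= m by apply: ae_const; apply: filterS hm => t; apply: le_trans.
  exists (- (s * (m + 1))) => _ [x [c [Cx c0 hz ->]]].
  have : f x <= s * ((m + c) + 1).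
    apply: (fCb) => //; first lra.
    apply: filterS2 hm hz => t h1 h2; rewrite /negpart ge_max.
    have := ler_norm (- z t); rewrite normrN => h3.
    apply/andP; split; lra.
  move=> h; nra.
have qQ : forall z e, Linf P z -> Q z e -> q z <= e.
  by move=> z e Lz Qe; apply: ge_inf => //; exact: Qlb.
have Qq : forall z r, Linf P z -> (forall e, Q z e -> r <= e) -> r <= q z.
  by move=> z r Lz h; apply: lb_le_inf => //; exact: Qne.
have qadd : forall x y, Linf P x -> Linf P y -> q (addf x y) <= q x + q y.
  move=> z1 z2 L1 L2.
  have key : forall e1 e2, Q z1 e1 -> Q z2 e2 -> q (addf z1 z2) <= e1 + e2.
    move=> _ _ [x1 [c1 [C1x c10 h1 ->]]] [x2 [c2 [C2x c20 h2 ->]]].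
    apply: (qQ); first exact: Linf_add.
    exists (addf x1 x2), (c1 + c2); split.
    - exact: Cadd.
    - exact: addr_ge0.
    - by apply: filterS2 h1 h2 => t a b; rewrite /addf; lra.
    - rewrite (fadd _ _ (CL _ C1x) (CL _ C2x)); ring.
  suff : q (addf z1 z2) - q z2 <= q z1 by lra.
  apply: (Qq) => // e1 Qe1.
  suff : q (addf z1 z2) - e1 <= q z2 by lra.
  apply: (Qq) => // e2 Qe2.
  have := key _ _ Qe1 Qe2; lra.
have qscal_le : forall a z, 0 < a -> Linf P z -> q (scal a z) <= a * q z.
  move=> a z a0 Lz.
  suff : q (scal a z) / a <= q z.
    move=> h; have := ler_wpM2l (ltW a0) h.
    by rewrite mulrCA mulfV ?gt_eqF // mulr1.
  apply: (Qq) => // _ [x [c [Cx c0 hz ->]]].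
  have : q (scal a z) <= a * (- f x + s * c).
    apply: (qQ); first exact: Linf_scal.
    exists (scal a x), (a * c); split.
    - exact: Cscal (ltW a0) Cx.
    - exact: mulr_ge0 (ltW a0) c0.
    - apply: filterS hz => t h; rewrite /scal.
      have := ler_wpM2l (ltW a0) h; lra.
    - rewrite /scal (fscal _ _ (CL _ Cx)); ring.
  have ai : 0 < a^-1 by rewrite invr_gt0.
  move=> h; have := ler_wpM2l (ltW ai) h.
  by rewrite mulrA mulVf ?gt_eqF // mul1r mulrC.
have qscal : forall a z, 0 < a -> Linf P z -> q (scal a z) = a * q z.
  move=> a z a0 Lz; apply/eqP; rewrite eq_le qscal_le //=.
  have ai : 0 < a^-1 by rewrite invr_gt0.
  have := qscal_le _ _ ai (Linf_scal a Lz).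
  have -> : scal a^-1 (scal a z) = z.
    by apply: funext => t; rewrite /scal mulrA mulVf ?gt_eqF // mul1r.
  move=> h; have := ler_wpM2l (ltW a0) h.
  by rewrite mulrA mulfV ?gt_eqF // mul1r.
have [h [hadd hscal hq]] := @hahn_banach T R (Linf P) q (Linf0 P) (fun x y => @Linf_add _ _ _ P x y)
   (fun a x => @Linf_scal _ _ _ P a x) qadd qscal.
have hle : forall z c, Linf P z -> 0 <= c -> {ae P, forall t, z t <= c} ->
    h z <= s * c.
  move=> z c Lz c0 hz; apply: le_trans (hq _ Lz) _.
  have := qQ z (- f zerof + s * c) Lz; rewrite f0 oppr0 add0r; apply.
  exists zerof, c; split => //; last by rewrite f0 oppr0 add0r.
  by apply: filterS hz => t; rewrite /zerof add0r.
have hN : forall z, Linf P z -> h (scal (-1) z) = - h z.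
  by move=> z Lz; rewrite hscal // mulN1r.
have hC : forall x, C x -> h x <= - f x.
  move=> x Cx; apply: le_trans (hq _ (CL _ Cx)) _.
  have := qQ x (- f x + s * 0) (CL _ Cx); rewrite mulr0 addr0; apply.
  exists x, 0; split => //; last by rewrite mulr0 addr0.
  by apply: aeW => t; rewrite addr0.
have gdual : Linf_dual P (fun x => f x + h x).
  split.
  - move=> x y Lx Ly; rewrite (fadd _ _ Lx Ly).
    have -> : h (x \+ y) = h x + h y by exact: hadd.
    ring.
  - move=> a x Lx; rewrite (fscal _ _ Lx).
    have -> : h (fun t => a * x t) = a * h x by exact: hscal.
    ring.
  - move=> x y Lx Ly exy; rewrite (fae _ _ Lx Ly exy).
    have L1 := Linf_add Lx (Linf_scal (-1) Ly).
    have L2 := Linf_add Ly (Linf_scal (-1) Lx).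
    have h1 : h (addf x (scal (-1) y)) <= s * 0.
      apply: hle => //; apply: filterS exy => t e; rewrite /addf /scal e; lra.
    have h2 : h (addf y (scal (-1) x)) <= s * 0.
      apply: hle => //; apply: filterS exy => t e; rewrite /addf /scal e; lra.
    have Ly' := Linf_scal (-1) Ly; have Lx' := Linf_scal (-1) Lx.
    rewrite hadd ?hN // in h1.
    rewrite hadd ?hN // in h2.
    lra.
  - exists (Mf + s) => x c Lx hx.
    have c0 : 0 <= c by apply: ae_const; apply: filterS hx => t; apply: le_trans.
    have h1 : h x <= s * c.
      apply: hle => //; apply: filterS hx => t; apply: le_trans; exact: ler_norm.
    have h2 : h (scal (-1) x) <= s * c.
      apply: hle => //; first exact: Linf_scal.
      apply: filterS hx => t; rewrite /scal mulN1r; apply: le_trans.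
      by rewrite -normrN ler_norm.
    rewrite hN // in h2.
    have h3 := fb _ _ Lx hx.
    apply: le_trans (ler_normD _ _) _.
    have : `|h x| <= s * c by rewrite ler_norml; apply/andP; split; lra.
    lra.
exists (fun x => f x + h x); split => //; split.
  move=> x Lx hx.
  have := hle (scal (-1) x) 0 (Linf_scal (-1) Lx) (lexx 0).
  rewrite hN // mulr0 => H.
  have : - h x <= 0 by apply: H; apply: filterS hx => t; rewrite /scal; lra.
  lra.
split => // x Cx; have := hC _ Cx; lra.
Qed.
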